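(* Let $(A_i,\omega_i)$, $i=1,2$, be commutative unital baric algebras over $K$. Then the map $(I,J)\mapsto I\bowtie J=\{(a,b)\in A_1\bowtie A_2: a\in I,\ b\in J\}$ is a bijection from $\mathcal{I}(A_1,\omega_1)\times\mathcal{I}(A_2,\omega_2)$ onto $\mathcal{I}(A_1\bowtie A_2,\omega_1\bowtie\omega_2)\setminus\{\operatorname{Ker}(\omega_1\bowtie\omega_2)\}$, with inverse $I\mapsto(I_1,I_2)$.
   Context: A baric algebra over a field $K$ is a pair $(A,\omega)$ where $A$ is a (not necessarily associative) $K$-algebra and $\omega:A\to K$ is a nonzero $K$-algebra homomorphism. For baric algebras $(A_1,\omega_1),(A_2,\omega_2)$, $A_1\bowtie A_2$ denotes the vector space $A_1\oplus A_2$ with product $(a_1,a_2)(b_1,b_2)=(a_1b_1+\omega_2(b_2)a_1,\ a_2b_2+\omega_1(b_1)a_2)$, and $\omega_1\bowtie\omega_2(a_1,a_2)=\omega_1(a_1)+\omega_2(a_2)$. For a baric algebra $(A,\omega)$, $\mathcal{I}(A,\omega)$ is the set of two-sided ideals $I$ of $A$ with $I\subseteq\operatorname{Ker}\omega$. For $I\subseteq A_1\bowtie A_2$, $I_1=\{a_1:\exists a_2,\ (a_1,a_2)\in I\}$ and $I_2=\{a_2:\exists a_1,\ (a_1,a_2)\in I\}$. *)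

(* Defs.v *)
(* Non-associative algebras are not in MathComp, so a
   (commutative, unital) baric algebra over a field K is given explicitly by
   a K-vector space A (lmodType K), a bilinear product mul and a weight
   omega, subject to the axioms below. *)
From HB Require Import structures.
From mathcomp Require Import all_boot all_order all_algebra.
Set Implicit Arguments. Unset Strict Implicit. Unset Printing Implicit Defensive.
Import GRing.Theory.
Local Open Scope ring_scope.

Section Baric.
Variable K : fieldType.

Definition bilinear_mul (A : lmodType K) (mul : A -> A -> A) : Prop :=
  (forall (k : K) (x y z : A), mul (k *: x + y) z = k *: mul x z + mul y z) /\
  (forall (k : K) (x y z : A), mul z (k *: x + y) = k *: mul z x + mul z y).

Definition baric_weight (A : lmodType K) (mul : A -> A -> A) (omega : A -> K)
  : Prop :=
  (forall (k : K) (x y : A), omega (k *: x + y) = k * omega x + omega y) /\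
  (forall x y : A, omega (mul x y) = omega x * omega y) /\
  (exists x : A, omega x <> 0).

Definition is_baric_algebra (A : lmodType K) (mul : A -> A -> A)
  (omega : A -> K) : Prop :=
  bilinear_mul mul /\ baric_weight mul omega.

Definition is_commutative_unital (A : lmodType K) (mul : A -> A -> A) : Prop :=
  (forall x y : A, mul x y = mul y x) /\
  (exists e : A, forall x : A, mul e x = x /\ mul x e = x).

Definition is_ideal (A : lmodType K) (mul : A -> A -> A) (I : A -> Prop)
  : Prop :=
  I 0 /\
  (forall x y : A, I x -> I y -> I (x + y)) /\
  (forall (k : K) (x : A), I x -> I (k *: x)) /\
  (forall a x : A, I x -> I (mul a x) /\ I (mul x a)).

Definition kerp (A : lmodType K) (omega : A -> K) : A -> Prop :=
  fun x => omega x = 0.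

Definition in_calI (A : lmodType K) (mul : A -> A -> A) (omega : A -> K)
  (I : A -> Prop) : Prop :=
  is_ideal mul I /\ (forall x, I x -> kerp omega x).

Definition bowtie_mul (A1 A2 : lmodType K)
  (mul1 : A1 -> A1 -> A1) (omega1 : A1 -> K)
  (mul2 : A2 -> A2 -> A2) (omega2 : A2 -> K)
  (x y : (A1 * A2)%type) : (A1 * A2)%type :=
  (mul1 x.1 y.1 + omega2 y.2 *: x.1, mul2 x.2 y.2 + omega1 y.1 *: x.2).

Definition bowtie_omega (A1 A2 : lmodType K)
  (omega1 : A1 -> K) (omega2 : A2 -> K) (x : (A1 * A2)%type) : K :=
  omega1 x.1 + omega2 x.2.

Definition bowtie_set (A1 A2 : lmodType K) (I : A1 -> Prop) (J : A2 -> Prop)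
  : (A1 * A2)%type -> Prop :=
  fun x => I x.1 /\ J x.2.

Definition proj_set1 (A1 A2 : lmodType K) (L : (A1 * A2)%type -> Prop)
  : A1 -> Prop := fun a => exists b : A2, L (a, b).

Definition proj_set2 (A1 A2 : lmodType K) (L : (A1 * A2)%type -> Prop)
  : A2 -> Prop := fun b => exists a : A1, L (a, b).

End Baric.

(* Main.v *)
Require Import Defs.
From HB Require Import structures.
From mathcomp Require Import all_boot all_order all_algebra.
From Stdlib Require Import FunctionalExtensionality PropExtensionality.
Set Implicit Arguments. Unset Strict Implicit. Unset Printing Implicit Defensive.
Import GRing.Theory.
Local Open Scope ring_scope.

Section Helpers.
Variable K : fieldType.
Variable A : lmodType K.
Variable mul : A -> A -> A.
Hypothesis hb : bilinear_mul mul.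

Lemma hmulDl x y z : mul (x + y) z = mul x z + mul y z.
Proof. by case: hb => h _; rewrite -[x]scale1r h !scale1r. Qed.
Lemma hmulDr x y z : mul z (x + y) = mul z x + mul z y.
Proof. by case: hb => _ h; rewrite -[x]scale1r h !scale1r. Qed.
Lemma hmul0l z : mul 0 z = 0.
Proof.
have h := hmulDl 0 0 z; rewrite addr0 in h.
by apply: (@addrI _ (mul 0 z)); rewrite -h addr0.
Qed.
Lemma hmul0r z : mul z 0 = 0.
Proof.
have h := hmulDr 0 0 z; rewrite addr0 in h.
by apply: (@addrI _ (mul z 0)); rewrite -h addr0.
Qed.
Lemma hmulNl x z : mul (- x) z = - mul x z.
Proof.
apply: (@addrI _ (mul x z)); by rewrite -hmulDl !subrr hmul0l.
Qed.

Variable omega : A -> K.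
Hypothesis hw : (forall (k : K) (x y : A), omega (k *: x + y) = k * omega x + omega y).
Lemma homD x y : omega (x + y) = omega x + omega y.
Proof. by rewrite -[x]scale1r hw scale1r mul1r. Qed.
Lemma hom0 : omega 0 = 0.
Proof.
have h := homD 0 0; rewrite addr0 in h.
by apply: (@addrI _ (omega 0)); rewrite -h addr0.
Qed.
Lemma homZ k x : omega (k *: x) = k * omega x.
Proof. by rewrite -[k *: x]addr0 hw hom0 addr0. Qed.
End Helpers.

Theorem proposition5p4 (K : fieldType)
  (A1 : lmodType K) (mul1 : A1 -> A1 -> A1) (omega1 : A1 -> K)
  (A2 : lmodType K) (mul2 : A2 -> A2 -> A2) (omega2 : A2 -> K) :
  is_baric_algebra mul1 omega1 -> is_commutative_unital mul1 ->
  is_baric_algebra mul2 omega2 -> is_commutative_unital mul2 ->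
  let mul := bowtie_mul mul1 omega1 mul2 omega2 in
  let omega := bowtie_omega omega1 omega2 in
  (* the map (I,J) |-> I ⋈ J lands in I(A1⋈A2) \ {Ker omega} *)
  (forall (I : A1 -> Prop) (J : A2 -> Prop),
     in_calI mul1 omega1 I -> in_calI mul2 omega2 J ->
     in_calI mul omega (bowtie_set I J) /\ bowtie_set I J <> kerp omega) /\
  (* L |-> (L_1, L_2) lands in I(A1) x I(A2) and is a right inverse *)
  (forall L : (A1 * A2)%type -> Prop,
     in_calI mul omega L -> L <> kerp omega ->
     in_calI mul1 omega1 (proj_set1 L) /\ in_calI mul2 omega2 (proj_set2 L) /\
     bowtie_set (proj_set1 L) (proj_set2 L) = L) /\
  (* and a left inverse *)
  (forall (I : A1 -> Prop) (J : A2 -> Prop),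
     in_calI mul1 omega1 I -> in_calI mul2 omega2 J ->
     proj_set1 (bowtie_set I J) = I /\ proj_set2 (bowtie_set I J) = J).
Proof.
move=> [hb1 [hw1 [hm1 [x1 hx1]]]] [hc1 [e1 he1]].
move=> [hb2 [hw2 [hm2 [x2 hx2]]]] [hc2 [e2 he2]] mul omega.
have nz1 : omega1 x1 != 0 by apply/eqP.
have nz2 : omega2 x2 != 0 by apply/eqP.
have w1e : omega1 e1 = 1.
  apply: (mulIf nz1); rewrite mul1r -hm1; by rewrite (he1 x1).1.
have w2e : omega2 e2 = 1.
  apply: (mulIf nz2); rewrite mul1r -hm2; by rewrite (he2 x2).1.
split; last split.
- move=> I J [[I0 [ID [IZ IM]]] Iker] [[J0 [JD [JZ JM]]] Jker]; split.
  + split; last first.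
      move=> [a b] [/= ha hb]; rewrite /kerp /omega /bowtie_omega /=.
      by rewrite (Iker _ ha) (Jker _ hb) addr0.
    split; first by split.
    split; first by move=> [a b] [c d] [/= ha hb] [hc hd]; split; [apply: ID|apply: JD].
    split; first by move=> k [a b] [/= ha hb]; split; [apply: IZ|apply: JZ].
    move=> [a b] [c d] [/= hc hd]; rewrite /mul /bowtie_mul /bowtie_set /=.
    rewrite (Iker _ hc) (Jker _ hd) !scale0r !addr0.
    split; split.
    * by case: (IM a c hc).
    * by case: (JM b d hd).
    * by apply: ID; [case: (IM a c hc) | apply: IZ].
    * by apply: JD; [case: (JM b d hd) | apply: JZ].
  + move=> heq.
    set u := (omega1 x1)^-1 *: x1.
    set v := - ((omega2 x2)^-1 *: x2).
    have hu : omega1 u = 1 by rewrite /u (homZ hw1) mulVf.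
    have hv : omega2 v = -1.
      by rewrite /v -scaleN1r !(homZ hw2) mulVf // mulr1.
    have : bowtie_set I J (u, v).
      rewrite heq /kerp /omega /bowtie_omega /= hu hv; exact: subrr.
    move=> [/= /Iker]; rewrite /kerp hu => /eqP; by rewrite oner_eq0.
- move=> L [[L0 [LD [LZ LM]]] Lker] Lne.
  have conv : forall p q, L p -> p = q -> L q by move=> p q hp <-.
  have Lsub : forall p q, L p -> L q -> L (p - q).
    by move=> p q hp hq; apply: LD => //; rewrite -scaleN1r; apply: LZ.
  have kerab : forall a b, L (a, b) -> omega2 b = - omega1 a.
    move=> a b /Lker; rewrite /kerp /omega /bowtie_omega /= => h.
    by apply/eqP; rewrite -addr_eq0 addrC; apply/eqP.
  have P1 : forall a b, L (a, b) -> L (0, b + omega1 a *: e2).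
    move=> a b hab; case: (LM (0, e2) (a, b) hab) => h _.
    apply: (conv _ _ h); rewrite /mul /bowtie_mul /=.
    by rewrite (hmul0l hb1) scaler0 addr0 (he2 b).1.
  have P2 : forall a b, L (a, b) -> L (a - omega1 a *: e1, 0).
    move=> a b hab; case: (LM (e1, 0) (a, b) hab) => h _.
    apply: (conv _ _ h); rewrite /mul /bowtie_mul /=.
    by rewrite (hmul0l hb2) scaler0 addr0 (he1 a).1 (kerab _ _ hab) scaleNr.
  have ht : forall a b, L (a, b) -> omega1 a = 0.
    move=> a b hab; case: (eqVneq (omega1 a) 0) => // ht; exfalso; apply: Lne.
    apply: functional_extensionality => p; apply: propositional_extensionality.
    split; first exact: Lker.
    move: p => [y1 y2]; rewrite /kerp /omega /bowtie_omega /= => hy.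
    set t := omega1 a.
    have E : L (e1, - e2).
      have h := LZ t^-1 _ (Lsub _ _ (Lsub _ _ hab (P2 _ _ hab)) (P1 _ _ hab)).
      have h' : L (t^-1 *: (a - (a - t *: e1) - 0), t^-1 *: (b - 0 - (b + t *: e2))) by exact: h.
      apply: (conv _ _ h'); congr (_, _).
        by rewrite subr0 opprB addrC subrK scalerA mulVf // scale1r.
      rewrite subr0 opprD addrA subrr add0r scalerN scalerA mulVf // scale1r.
      by [].
    set s := omega1 y1.
    have y2e : omega2 y2 = - s by apply/eqP; rewrite -addr_eq0 addrC; apply/eqP.
    have Q1 : L (y1, - (s *: e2)).
      case: (LM (y1, 0) (e1, - e2) E) => _ h.
      apply: (conv _ _ h); rewrite /mul /bowtie_mul /=.
      by rewrite (he1 y1).1 (hom0 hw2) scale0r addr0 (hmul0r hb2) add0r scalerN.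
    have Q2 : L (- s *: e1, - y2).
      case: (LM (0, y2) (e1, - e2) E) => _ h.
      apply: (conv _ _ h); rewrite /mul /bowtie_mul /=.
      rewrite (hmul0r hb1) add0r y2e (hom0 hw1) scale0r addr0.
      by rewrite (hmulNl hb2) (he2 y2).1.
    have h := Lsub _ _ (Lsub _ _ Q1 Q2) (LZ s _ E).
    have h' : L (y1 - - s *: e1 - s *: e1, - (s *: e2) - - y2 - s *: - e2) by exact: h.
    apply: (conv _ _ h'); congr (_, _).
      by rewrite scaleNr opprK addrK.
    by rewrite opprK scalerN opprK addrAC addNr add0r.
  have La0 : forall a b, L (a, b) -> L (a, 0).
    move=> a b hab; apply: (conv _ _ (P2 _ _ hab)).
    by rewrite (ht _ _ hab) scale0r subr0.
  have L0b : forall a b, L (a, b) -> L (0, b).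
    move=> a b hab; apply: (conv _ _ (P1 _ _ hab)).
    by rewrite (ht _ _ hab) scale0r addr0.
  split; last split.
  + split; last first.
      by move=> a [b hab]; rewrite /kerp; exact: ht hab.
    split; first by exists 0.
    split; first by move=> a c [b hab] [d hcd]; exists (b + d); exact: LD hab hcd.
    split; first by move=> k a [b hab]; exists (k *: b); exact: LZ k _ hab.
    move=> a x [b hxb]; have hx := La0 _ _ hxb.
    case: (LM (a, 0) (x, 0) hx) => h1 h2; split.
    * eexists; apply: (conv _ _ h1); rewrite /mul /bowtie_mul /=.
      by rewrite (hom0 hw2) scale0r addr0.
    * eexists; apply: (conv _ _ h2); rewrite /mul /bowtie_mul /=.
      by rewrite (hom0 hw2) scale0r addr0.
  + split; last first.
      move=> b [a hab]; rewrite /kerp (kerab _ _ hab) (ht _ _ hab); exact: oppr0.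
    split; first by exists 0.
    split; first by move=> a c [b hab] [d hcd]; exists (b + d); exact: LD hab hcd.
    split; first by move=> k a [b hab]; exists (k *: b); exact: LZ k _ hab.
    move=> a x [b hxb]; have hx := L0b _ _ hxb.
    case: (LM (0, a) (0, x) hx) => h1 h2; split.
    * eexists; apply: (conv _ _ h1); rewrite /mul /bowtie_mul /=.
      by rewrite (hom0 hw1) scale0r addr0.
    * eexists; apply: (conv _ _ h2); rewrite /mul /bowtie_mul /=.
      by rewrite (hom0 hw1) scale0r addr0.
  + apply: functional_extensionality => -[a b]; apply: propositional_extensionality.
    rewrite /bowtie_set /proj_set1 /proj_set2 /=; split.
    * move=> [[b' h1] [a' h2]].
      have h := LD _ _ (La0 _ _ h1) (L0b _ _ h2).
      have h' : L (a + 0, 0 + b) by exact: h.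
      by apply: (conv _ _ h'); rewrite addr0 add0r.
    * by move=> hab; split; [exists b | exists a].
- move=> I J [[I0 _] _] [[J0 _] _]; split;
    apply: functional_extensionality => x; apply: propositional_extensionality;
    rewrite /bowtie_set /proj_set1 /proj_set2 /=; split.
  + by case=> ? [].
  + by move=> h; exists 0.
  + by case=> ? [].
  + by move=> h; exists 0.
Qed.
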